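(* Let $d=\infty$ and $C>0$. (1) For product weights ${\boldsymbol\gamma}$: ${\boldsymbol\gamma}\in\mathcal S_{d,C}$ iff $\sum_{j\in\mathbb N}\gamma_j<\infty$. (2) For POD weights ${\boldsymbol\gamma}$ with parameters $a,p$: if $p>a$ and $\Gamma_1>0$, then ${\boldsymbol\gamma}\in\mathcal S_{d,C}$ iff $\sum_{j\in\mathbb N}\gamma_j<\infty$; and if $p=a\ge1$, then $\sum_{j\in\mathbb N}(C^2\gamma_j)^{1/p}<1$ implies ${\boldsymbol\gamma}\in\mathcal S_{d,C}$. (3) For finite-order weights ${\boldsymbol\gamma}$ (of some order $\omega\in\mathbb N$): ${\boldsymbol\gamma}\in\mathcal S_{d,C}$ iff $\sum_{u\in\mathcal U_d}\gamma_u<\infty$.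
   Context: $\mathcal U_\infty$ denotes the set of finite subsets of $\mathbb N$; weights are families ${\boldsymbol\gamma}=(\gamma_u)_{u\in\mathcal U_\infty}$ of non-negative reals. For $C>0$, $\mathcal S_{\infty,C}=\{{\boldsymbol\gamma}:\sum_{v\in\mathcal U_\infty}C^{2|v|}\gamma_v<\infty\}$. Product weights: $\gamma_u=\prod_{j\in u}\gamma_j$ (with $\gamma_\emptyset=1$) for a non-increasing sequence $(\gamma_j)_{j\in\mathbb N}$ of non-negative reals. POD weights: $\gamma_u=\Gamma_{|u|}\prod_{j\in u}\gamma_j$ with $(\gamma_j)$ as before and non-negative $(\Gamma_k)_{k\ge0}$ satisfying $\Gamma_k\le C_a(k!)^a$ for all $k$ and some constants $a,C_a>0$; $p=\mathrm{decay}((\gamma_j)_{j\in\mathbb N})$, where $\mathrm{decay}((a_v)_{v\in V})=\sup\{\tau>0:\sum_v a_v^{1/\tau}<\infty\}$ ($\sup\emptyset=0$). Finite-order weights of order $\omega\in\mathbb N$: $\gamma_u=0$ whenever $|u|>\omega$. *)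

(* Defs.v *)
From HB Require Import structures.
From mathcomp Require Import all_boot all_order all_algebra finmap.
From mathcomp Require Import all_classical all_reals all_analysis.
Set Implicit Arguments. Unset Strict Implicit. Unset Printing Implicit Defensive.
Import Order.TTheory GRing.Theory Num.Theory.
Local Open Scope classical_set_scope.
Local Open Scope ring_scope.
Local Open Scope fset_scope.

(* U_infinity: finite subsets of the index set (nat, relabelling N = {1,2,...}). *)
Definition Uinf := {fset nat}.

Definition weights (R : realType) := Uinf -> R.

Definition nonneg_weights (R : realType) (g : weights R) := forall u, 0 <= g u.

Definition in_S (R : realType) (C : R) (g : weights R) : Prop :=
  (\esum_(v in [set: Uinf]) ((C ^+ (2 * #|` v|)%N) * g v)%:E < +oo)%E.

Definition sum_finite (R : realType) (s : nat -> R) : Prop :=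
  (\esum_(j in [set: nat]) (s j)%:E < +oo)%E.

Definition weakly_decr (R : realType) (s : nat -> R) : Prop :=
  forall i j : nat, (i <= j)%N -> s j <= s i.

Definition prod_weights (R : realType) (s : nat -> R) : weights R :=
  fun u => \prod_(j <- u) s j.

Definition POD_weights (R : realType) (Gam s : nat -> R) : weights R :=
  fun u => Gam #|` u| * \prod_(j <- u) s j.

Definition finite_order (R : realType) (omega : nat) (g : weights R) : Prop :=
  forall u : Uinf, (omega < #|` u|)%N -> g u = 0.

(* decay((a_v)_v) = sup { tau > 0 : sum_v a_v^{1/tau} < oo },  sup of empty set = 0;
   valued in the extended reals (may be +oo). *)
Definition decay (R : realType) (s : nat -> R) : \bar R :=
  ereal_sup ([set (tau%:E)%E | tau in
     [set tau : R | 0 < tau /\ sum_finite (fun j => s j `^ tau^-1)]] `|` [set 0%E]).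

(* Main.v *)
From HB Require Import structures.
From mathcomp Require Import all_boot all_order all_algebra finmap.
From mathcomp Require Import all_classical all_reals all_analysis.
From mathcomp.algebra_tactics Require Import ring lra.
Require Import Defs.
Import Order.TTheory GRing.Theory Num.Theory.
Set Implicit Arguments. Unset Strict Implicit. Unset Printing Implicit Defensive.
Local Open Scope classical_set_scope.
Local Open Scope ring_scope.
Local Open Scope fset_scope.

Fixpoint subsL (L : seq nat) : seq {fset nat} :=
  if L is x :: L' then subsL L' ++ [seq x |` v | v <- subsL L'] else [:: (fset0 : {fset nat})].

Lemma subsL_sub L (v : {fset nat}) : v \in subsL L -> forall j, j \in v -> j \in L.
Proof.
elim: L v => [|x L IH] v /=; first by rewrite inE => /eqP -> j; rewrite inE.
rewrite mem_cat => /orP[/IH H j /H jL|/mapP[w /IH H ->] j]; first by rewrite inE jL orbT.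
by rewrite in_fset1U inE => /orP[->//|/H ->]; rewrite orbT.
Qed.

Lemma subsL_mem L (v : {fset nat}) : uniq L -> (forall j, j \in v -> j \in L) -> v \in subsL L.
Proof.
elim: L v => [|x L IH] v.
  move=> _ H; suff -> : v = fset0 by rewrite /subsL mem_seq1.
  by apply/fsetP => j; rewrite in_fset0; apply/negbTE/negP => /H.
rewrite /=; move=> /andP[xL uL] H; rewrite mem_cat.
case: (boolP (x \in v)) => xv.
  apply/orP; right; apply/mapP; exists (v `\ x); last by rewrite fsetD1K.
  apply: IH => // j; rewrite in_fsetD1 => /andP[jx /H]; rewrite inE.
  by rewrite (negbTE jx).
apply/orP; left; apply: IH => // j jv; have := H j jv; rewrite inE.
by case: eqP jv => [->|//]; rewrite (negbTE xv).
Qed.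

Lemma subsL_uniq L : uniq L -> uniq (subsL L).
Proof.
elim: L => [|x L IH] //= /andP[xL uL].
have nx : forall v, v \in subsL L -> x \notin v.
  move=> v vin; apply/negP => xv; have := subsL_sub vin xv.
  by rewrite (negbTE xL).
rewrite cat_uniq IH //=; apply/andP; split.
  apply/hasPn => w /mapP[v vin ->]; apply/negP => /nx.
  by rewrite fset1U1.
rewrite map_inj_in_uniq ?IH // => v w vin win E.
apply/fsetP => j; case: (boolP (j == x)) => [/eqP ->|jx].
  by rewrite (negbTE (nx _ vin)) (negbTE (nx _ win)).
have := congr1 (fun A => j \in A) E; rewrite /= !in_fset1U (negbTE jx) //.
Qed.

Lemma card_cons x L (v : {fset nat}) : x \notin L -> v \in subsL L -> #|` x |` v| = (#|` v|).+1.
Proof.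
move=> xL vin; rewrite cardfsU1; case: (boolP (x \in v)) => // xv.
by have := subsL_sub vin xv; rewrite (negbTE xL).
Qed.

Lemma big_cons_fset (R : Type) (idx : R) (op : Monoid.com_law idx) (F : nat -> R)
  x L (v : {fset nat}) : x \notin L -> v \in subsL L ->
  \big[op/idx]_(j <- x |` v) F j = op (F x) (\big[op/idx]_(j <- v) F j).
Proof.
move=> xL vin; rewrite big_fsetU1 //; apply/negP => xv.
by have := subsL_sub vin xv; rewrite (negbTE xL).
Qed.

Lemma prod_cons_fset (R : comNzRingType) (F : nat -> R) x L (v : {fset nat}) :
  x \notin L -> v \in subsL L ->
  \prod_(j <- x |` v) F j = F x * \prod_(j <- v) F j.
Proof. exact: big_cons_fset. Qed.

Lemma sum_subsL_cons (R : nmodType) (F : {fset nat} -> R) x L :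
  \sum_(v <- subsL (x :: L)) F v = (\sum_(v <- subsL L) F v + \sum_(v <- subsL L) F (x |` v))%R.
Proof. by rewrite /= big_cat big_map. Qed.

Lemma cover_nat (s : seq nat) : exists N, {subset s <= iota 0 N}.
Proof.
exists (\max_(i <- s) i).+1 => x xs; rewrite mem_iota /= add0n ltnS.
exact: (leq_bigmax_seq (F := id)).
Qed.

Lemma cover_fset (s : seq {fset nat}) : exists N, {subset s <= subsL (iota 0 N)}.
Proof.
exists (\max_(v <- s) \max_(j <- v) j).+1 => v vs.
apply: subsL_mem; first exact: iota_uniq.
move=> j jv; rewrite mem_iota /= add0n ltnS.
apply: leq_trans (leq_bigmax_seq (F := fun v : {fset nat} => \max_(j <- v) j) _ vs isT).
exact: (leq_bigmax_seq (F := id)).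
Qed.

Section Gen.
Variable R : realType.
Local Open Scope ereal_scope.

Lemma seq_le_esum (T : choiceType) (f : T -> R) (s : seq T) :
  (forall x, (0 <= f x)%R) -> uniq s ->
  (\sum_(x <- s) f x)%:E <= \esum_(x in [set: T]) (f x)%:E.
Proof.
move=> f0 us; apply: esum_ge; exists [set` s]; first by split; [exact: (finite_seq s)|].
by rewrite -fsbig_seq // sumEFin.
Qed.

Lemma esum_le_seq (T : choiceType) (f : T -> R) (Ls : nat -> seq T) (M : R) :
  (forall x, (0 <= f x)%R) -> (forall N, uniq (Ls N)) ->
  (forall s : seq T, exists N, {subset s <= Ls N}) ->
  (forall N, (\sum_(x <- Ls N) f x <= M)%R) ->
  \esum_(x in [set: T]) (f x)%:E <= M%:E.
Proof.
move=> f0 uL cov HM; apply: ge_ereal_sup => _ [X [finX _] <-].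
have [s Xs] := (proj1 (finite_seqP X) finX).
have [N sN] := cov s.
apply: (@le_trans _ _ (\sum_(x \in [set` Ls N]) (f x)%:E)).
  apply: (lee_fsum_nneg_subset finX (finite_seq (Ls N))).  
    by move=> x; rewrite Xs !inE /= => /sN.
  by move=> x _; rewrite lee_fin.
by rewrite -fsbig_seq // sumEFin lee_fin.
Qed.

Lemma esum_finP (T : choiceType) (f : T -> R) (Ls : nat -> seq T) :
  (forall x, (0 <= f x)%R) -> (forall N, uniq (Ls N)) ->
  (forall s : seq T, exists N, {subset s <= Ls N}) ->
  (\esum_(x in [set: T]) (f x)%:E < +oo) <->
  exists M, forall N, (\sum_(x <- Ls N) f x <= M)%R.
Proof.
move=> f0 uL cov; split.
  move=> lt; exists (fine (\esum_(x in [set: T]) (f x)%:E)) => N.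
  have fin : \esum_(x in [set: T]) (f x)%:E \is a fin_num.
    by rewrite ge0_fin_numE // esum_ge0 // => x _; rewrite lee_fin.
  by rewrite -lee_fin fineK //; exact: seq_le_esum.
move=> [M HM]; apply: le_lt_trans (esum_le_seq f0 uL cov HM) (ltry M).
Qed.

End Gen.

Section Main.
Variable R : realType.

Lemma nat_finP (s : nat -> R) : (forall j, 0 <= s j) ->
  sum_finite s <-> exists M, forall N, \sum_(j <- iota 0 N) s j <= M.
Proof.
move=> s0; exact: (esum_finP (Ls := fun N => iota 0 N) s0 (fun N => iota_uniq 0 N) cover_nat).
Qed.

Lemma fset_finP (f : {fset nat} -> R) : (forall v, 0 <= f v) ->
  (\esum_(v in [set: {fset nat}]) (f v)%:E < +oo)%E <->
  exists M, forall N, \sum_(v <- subsL (iota 0 N)) f v <= M.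
Proof.
move=> f0; exact: (esum_finP f0 (fun N => subsL_uniq (iota_uniq 0 N)) cover_fset).
Qed.

Lemma single_le (F : {fset nat} -> R) L : (forall v, 0 <= F v) -> uniq L ->
  \sum_(x <- L) F [fset x] <= \sum_(v <- subsL L) F v.
Proof.
move=> F0; elim: L => [|x L IH]; first by rewrite big_nil => _; apply: sumr_ge0.
move=> /andP[xL uL]; rewrite sum_subsL_cons big_cons [X in X <= _]addrC lerD ?IH //.
have f0in : fset0 \in subsL L by apply: subsL_mem => // j; rewrite in_fset0.
rewrite (bigD1_seq fset0 f0in (subsL_uniq uL)) /= fsetU0 lerDl sumr_ge0 //.
Qed.

Lemma prod_sum (s : nat -> R) (C : R) L : uniq L ->
  \sum_(v <- subsL L) C ^+ (2 * #|` v|) * \prod_(j <- v) s j =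
  \prod_(j <- L) (1 + C ^+ 2 * s j).
Proof.
elim: L => [|x L IH].
  by move=> _; rewrite /= big_seq1 big_nil big_seq_fset0 cardfs0 muln0 expr0 mulr1.
move=> /andP[xL uL]; rewrite sum_subsL_cons big_cons -IH //.
have -> : \sum_(v <- subsL L) C ^+ (2 * #|` x |` v|) * \prod_(j <- x |` v) s j =
    C ^+ 2 * s x * \sum_(v <- subsL L) C ^+ (2 * #|` v|) * \prod_(j <- v) s j.
  rewrite mulr_sumr big_seq [RHS]big_seq; apply: eq_bigr => v vin.
  rewrite (card_cons xL vin) (prod_cons_fset _ xL vin) mulnS exprD; ring.
by ring.
Qed.

Lemma part1 (C : R) (s : nat -> R) : 0 < C -> (forall j, 0 <= s j) ->
  (in_S C (prod_weights s) <-> sum_finite s).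
Proof.
move=> C0 s0; have C0' : 0 <= C := ltW C0.
have f0 : forall v, 0 <= C ^+ (2 * #|` v|) * prod_weights s v.
  by move=> v; rewrite mulr_ge0 ?exprn_ge0 //; rewrite /prod_weights; apply: prodr_ge0 => *.
rewrite /in_S (fset_finP f0) (nat_finP s0) /prod_weights; split.
  move=> [M HM]; exists (M / C ^+ 2) => N; rewrite ler_pdivlMr ?exprn_gt0 //.
  apply: le_trans (HM N); rewrite mulr_suml.
  apply: le_trans (single_le (F := fun v => C ^+ (2 * #|` v|) * \prod_(j <- v) s j) _ _);
    last exact: iota_uniq.
    by apply: ler_sum => j _; rewrite cardfs1 big_seq_fset1 muln1 mulrC.
  by move=> v; rewrite mulr_ge0 ?exprn_ge0 //; rewrite /prod_weights; apply: prodr_ge0 => *.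
move=> [M HM]; exists (expR (C ^+ 2 * M)) => N; rewrite prod_sum ?iota_uniq //.
apply: (@le_trans _ _ (\prod_(j <- iota 0 N) expR (C ^+ 2 * s j))).
  by apply: ler_prod => j _; rewrite expR_ge1Dx andbT addr_ge0 ?mulr_ge0 ?exprn_ge0 ?s0.
by rewrite -expR_sum ler_expR -mulr_sumr; apply: ler_wpM2l; rewrite ?exprn_ge0.
Qed.

Lemma part3 (C : R) (omega : nat) (g : weights R) : 0 < C ->
  nonneg_weights g -> finite_order omega g ->
  (in_S C g <-> (\esum_(u in [set: Uinf]) (g u)%:E < +oo)%E).
Proof.
move=> C0 g0 fo; have C0' : 0 <= C := ltW C0.
have h0 : forall v, 0 <= C ^+ (2 * #|` v|) * g v.
  by move=> v; rewrite mulr_ge0 ?exprn_ge0 ?g0.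
rewrite /in_S (fset_finP h0) (fset_finP g0).
have C20 : 0 < C ^+ 2 by rewrite exprn_gt0.
pose K1 := (1 + C ^+ 2) ^+ omega. pose K2 := (1 + (C ^+ 2)^-1) ^+ omega.
have K10 : 0 <= K1 by rewrite exprn_ge0 // addr_ge0 // ltW.
have K20 : 0 <= K2 by rewrite exprn_ge0 // addr_ge0 // ltW // invr_gt0.
have b1 : forall v, C ^+ (2 * #|` v|) * g v <= K1 * g v.
  move=> v; case: (leqP #|` v| omega) => hv; last by rewrite (fo v hv) !mulr0.
  apply: ler_wpM2r; first exact: g0.
  rewrite exprM.
  apply: (@le_trans _ _ ((1 + C ^+ 2) ^+ #|` v|)).
    apply: lerXn2r; rewrite ?nnegrE ?addr_ge0 ?exprn_ge0 //.
    by rewrite lerDr.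
  by apply: ler_weXn2l => //; rewrite lerDl exprn_ge0.
have b2 : forall v, g v <= K2 * (C ^+ (2 * #|` v|) * g v).
  move=> v; case: (leqP #|` v| omega) => hv; last by rewrite (fo v hv) !mulr0.
  rewrite mulrA exprM.
  apply: (@le_trans _ _ (((C ^+ 2)^-1) ^+ #|` v| * (C ^+ 2) ^+ #|` v| * g v)).
    by rewrite -exprMn mulVf ?gt_eqF // expr1n mul1r.
  apply: ler_wpM2r; first exact: g0.
  rewrite ler_pM2r ?exprn_gt0 //.
  apply: (@le_trans _ _ ((1 + (C ^+ 2)^-1) ^+ #|` v|)).
    apply: lerXn2r; rewrite ?nnegrE ?addr_ge0 ?invr_ge0 ?exprn_ge0 //.
    by rewrite lerDr.
  by apply: ler_weXn2l => //; rewrite lerDl invr_ge0 exprn_ge0.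
split => [[M HM]|[M HM]].
  exists (K2 * M) => N; apply: (@le_trans _ _ (\sum_(v <- subsL (iota 0 N)) K2 * (C ^+ (2 * #|` v|) * g v))).
    by apply: ler_sum => v _; exact: b2.
  by rewrite -mulr_sumr; apply: ler_wpM2l.
exists (K1 * M) => N; apply: (@le_trans _ _ (\sum_(v <- subsL (iota 0 N)) K1 * g v)).
  by apply: ler_sum => v _; exact: b1.
by rewrite -mulr_sumr; apply: ler_wpM2l.
Qed.

End Main.

Section Gen1.
Local Open Scope ring_scope.
Variable R : realType.
Variable c : nat -> R.
Hypothesis c0 : forall j, 0 <= c j.

Definition Hm (L : seq nat) (m : nat) : R :=
  \sum_(v <- subsL L) ((#|` v| + m)`!)%:R * \prod_(j <- v) c j.

Lemma Hm_ge0 L m : 0 <= Hm L m.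
Proof. by apply: sumr_ge0 => v _; rewrite mulr_ge0 // prodr_ge0. Qed.

Lemma Hm_nil m : Hm [::] m = (m`!)%:R.
Proof. by rewrite /Hm /= big_seq1 cardfs0 big_seq_fset0 mulr1. Qed.

Lemma Hm_cons x L m : x \notin L -> Hm (x :: L) m = Hm L m + c x * Hm L m.+1.
Proof.
move=> xL; rewrite /Hm sum_subsL_cons; congr (_ + _).
rewrite mulr_sumr big_seq [RHS]big_seq; apply: eq_bigr => v vin.
rewrite (card_cons xL vin) (prod_cons_fset _ xL vin) addSnnS; ring.
Qed.

Lemma bern (u d : R) n : 0 <= u -> 0 <= d ->
  u ^+ n * (u + d + n%:R * d) <= (u + d) ^+ n.+1.
Proof.
move=> u0 d0; elim: n => [|n IH]; first by rewrite expr0 mul0r addr0 mul1r expr1.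
apply: (@le_trans _ _ ((u + d) * (u ^+ n * (u + d + n%:R * d)))).
  have X0 : 0 <= u ^+ n by rewrite exprn_ge0.
  have N0 : 0 <= n%:R :> R by [].
  have h : 0 <= u ^+ n * (d * d) * (n%:R + 1) by rewrite !mulr_ge0 ?addr_ge0.
  rewrite exprS -mulrA mulrS; nra.
by rewrite [X in _ <= X]exprS; apply: ler_wpM2l; rewrite ?addr_ge0.
Qed.

Lemma Hm_tail T : uniq T -> \sum_(j <- T) c j < 1 ->
  forall m, Hm T m * (1 - \sum_(j <- T) c j) ^+ m.+1 <= (m`!)%:R.
Proof.
elim: T => [|x L IH]; first by move=> _ _ m; rewrite Hm_nil big_nil subr0 expr1n mulr1.
move=> /andP[xL uL]; rewrite big_cons => lt1 m.
have sL0 : 0 <= \sum_(j <- L) c j by apply: sumr_ge0.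
have ltL : \sum_(j <- L) c j < 1 by apply: le_lt_trans lt1; rewrite lerDr.
set w := 1 - \sum_(j <- L) c j.
have w0 : 0 < w by rewrite subr_gt0.
set u := 1 - (c x + \sum_(j <- L) c j).
have u0 : 0 < u by rewrite subr_gt0.
have wE : w = u + c x by rewrite /u /w; ring.
have h1 := IH uL ltL m; have h2 := IH uL ltL m.+1.
rewrite -/w in h1 h2.
have hb := bern m.+1 (ltW u0) (c0 x); rewrite -wE in hb.
rewrite Hm_cons //.
have W1 : 0 < w ^+ m.+1 by rewrite exprn_gt0.
have U0 : 0 <= u ^+ m.+1 by rewrite exprn_ge0 // ltW.
rewrite -(ler_pM2r (mulr_gt0 W1 w0)).
have A0 := Hm_ge0 L m; have B0 := Hm_ge0 L m.+1.
set A := Hm L m in h1 A0 *; set B := Hm L m.+1 in h2 B0 *.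
set U := u ^+ m.+1 in hb U0 *; set W := w ^+ m.+1 in h1 W1 *.
rewrite exprS in h2; rewrite exprS in hb.
rewrite factS natrM in h2.
set F := (m`!)%:R in h1 h2 *.
have F0 : 0 <= F by [].
have e1 : A * W * (U * w) <= F * (U * w) by apply: ler_wpM2r => //; rewrite mulr_ge0 // ltW.
have e2 : c x * U * (B * (w * W)) <= c x * U * (m.+1%:R * F).
  by apply: ler_wpM2l => //; rewrite mulr_ge0.
have e3 : F * (U * (w + m.+1%:R * c x)) <= F * (w * W) by apply: ler_wpM2l.
nra.
Qed.

End Gen1.

Lemma esum_approx (R : realType) (T : choiceType) (f : T -> R) (Ls : nat -> seq T) (e : R) :
  (forall x, 0 <= f x) -> (forall N, uniq (Ls N)) ->
  (forall s : seq T, exists N, {subset s <= Ls N}) -> 0 < e ->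
  (\esum_(x in [set: T]) (f x)%:E < +oo)%E ->
  exists N, fine (\esum_(x in [set: T]) (f x)%:E) - e < \sum_(x <- Ls N) f x.
Proof.
move=> f0 uL cov e0 lt.
have fin : \esum_(x in [set: T]) (f x)%:E \is a fin_num.
  by rewrite ge0_fin_numE // esum_ge0 // => x _; rewrite lee_fin.
have [//|hn] := pselect (exists N, fine (\esum_(x in [set: T]) (f x)%:E) - e < \sum_(x <- Ls N) f x).
exfalso.
have H : (forall N, \sum_(x <- Ls N) f x <= fine (\esum_(x in [set: T]) (f x)%:E) - e).
  by move=> N; rewrite leNgt; apply/negP => h; apply: hn; exists N.
have key := @esum_le_seq R T f Ls _ f0 uL cov H.
move: key; rewrite -[X in (X <= _)%E](fineK fin) lee_fin; set l := fine _ => hl.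
lra.
Qed.

Section Gen1b.
Local Open Scope ring_scope.
Variable R : realType.
Variable c : nat -> R.
Hypothesis c0 : forall j, 0 <= c j.

Lemma tail_small : sum_finite c -> exists N0, forall k, \sum_(j <- iota N0 k) c j <= 2^-1.
Proof.
move=> sf.
have e0 : (0:R) < 2^-1 by rewrite invr_gt0.
have [N0 HN0] := esum_approx (Ls := fun N => iota 0 N) c0 (fun N => iota_uniq 0 N) cover_nat e0 sf.
exists N0 => k.
have fin : \esum_(x in [set: nat]) (c x)%:E \is a fin_num.
  by rewrite ge0_fin_numE // esum_ge0 // => x _; rewrite lee_fin.
have := seq_le_esum c0 (iota_uniq 0 (N0 + k)).
rewrite -(fineK fin) lee_fin iotaD big_cat /=.
move: HN0; set l := fine _ => h1 h2; lra.
Qed.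

Lemma Hm_step L x K mu S Lam : x \notin L -> 0 <= K -> 0 <= mu -> c x <= S ->
  mu <= Lam -> 0 <= S ->
  (forall m, Hm c L m <= (m`!)%:R * K * mu ^+ m.+1) ->
  forall m, Hm c (x :: L) m <= (m`!)%:R * (K * (1 + S * Lam)) * (2 * mu) ^+ m.+1.
Proof.
move=> xL K0 mu0 cS muL S0 H m; rewrite Hm_cons //.
have h1 := H m; have h2 := H m.+1.
rewrite factS natrM exprS in h2.
rewrite exprMn.
have hP : (m.+1%:R : R) <= 2 ^+ m.+1.
  by rewrite -natrX ler_nat ltnW // ltn_expl.
have hP1 : (1 : R) <= 2 ^+ m.+1 by rewrite exprn_ege1 // ler1n.
set F := (m`!)%:R in h1 h2 *; set P := 2 ^+ m.+1 in hP hP1 *.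
set Mu := mu ^+ m.+1 in h1 h2 *.
have F0 : 0 <= F by [].
have Mu0 : 0 <= Mu by rewrite exprn_ge0.
have Q0 : 0 <= F * K * Mu by rewrite !mulr_ge0.
have g1 : c x * mu <= S * Lam by apply: ler_pM.
have g2 : c x * mu * m.+1%:R <= S * Lam * P by apply: ler_pM; rewrite ?mulr_ge0.
have g3 : F * K * Mu * (c x * mu * m.+1%:R) <= F * K * Mu * (S * Lam * P) by apply: ler_wpM2l.
have g4 : F * K * Mu * 1 <= F * K * Mu * P by apply: ler_wpM2l.
have e1 : c x * Hm c L m.+1 <= c x * (m.+1%:R * F * K * (mu * Mu)) by apply: ler_wpM2l.
have B0 := Hm_ge0 c0 L m.+1.
nra.
Qed.

Lemma Hm_head T S N0 : (forall m, Hm c T m <= (m`!)%:R * 1 * 2 ^+ m.+1) -> 0 <= S ->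
  (forall j, c j <= S) ->
  forall H, uniq (H ++ T) -> (size H <= N0)%N ->
  forall m, Hm c (H ++ T) m <=
    (m`!)%:R * (1 + S * 2 ^+ N0.+1) ^+ size H * (2 ^+ (size H).+1) ^+ m.+1.
Proof.
move=> HT S0 cS; elim => [|x H IH] /=.
  by move=> _ _ m; rewrite expr0 expr1; exact: HT.
move=> /andP[xHT uHT] hs m.
rewrite exprS [X in _ * X * _]mulrC [2 ^+ (size H).+2]exprS.
apply: Hm_step => //.
- by apply: exprn_ge0; apply: addr_ge0 => //; apply: mulr_ge0 => //; exact: exprn_ge0.
- by apply: ler_weXn2l; rewrite ?ler1n // ltnS ltnW.
- by move=> k; apply: IH => //; apply: ltnW.
Qed.

Lemma Hm_bound : sum_finite c -> exists M, forall N, Hm c (iota 0 N) 0 <= M.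
Proof.
move=> sf.
have [B HB] := (proj1 (nat_finP c0) sf).
have [N0 HN0] := tail_small sf.
have S0 : 0 <= B by apply: le_trans (HB 0%N); rewrite big_nil.
have cS : forall j, c j <= B.
  move=> j; apply: le_trans (HB j.+1); rewrite -addn1 iotaD big_cat /= big_seq1.
  by rewrite lerDr; apply: sumr_ge0.
exists ((1 + B * 2 ^+ N0.+1) ^+ N0 * 2 ^+ N0.+1) => N.
set h := minn N N0.
have hN : (h <= N)%N by apply: geq_minl.
have hN0 : (h <= N0)%N by apply: geq_minr.
have split : iota 0 N = iota 0 h ++ iota h (N - h) by rewrite -iotaD subnKC.
have sig : \sum_(j <- iota h (N - h)) c j <= 2^-1.
  case: (leqP N0 N) => hc.
    by have -> : h = N0 by apply/minn_idPr.
  have -> : h = N by apply/minn_idPl; apply: ltnW.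
  by rewrite subnn big_nil invr_ge0.
have uT : uniq (iota h (N - h)) by apply: iota_uniq.
have HT : forall m, Hm c (iota h (N - h)) m <= (m`!)%:R * 1 * 2 ^+ m.+1.
  move=> m; have := Hm_tail c0 uT (le_lt_trans sig _) m.
  rewrite mulr1.
  have lt12 : (2^-1 : R) < 1 by rewrite invr_lt1 ?ltr1n ?unitfE.
  move=> /(_ lt12) H1.
  rewrite -ler_pdivrMr ?exprn_gt0 // -exprVn.
  apply: le_trans H1; apply: ler_wpM2l; first exact: Hm_ge0.
  apply: lerXn2r; rewrite ?nnegrE ?invr_ge0 //; first lra.
  lra.
have := @Hm_head _ _ N0 HT S0 cS (iota 0 h) _ _ 0%N.
rewrite -split size_iota => /(_ (iota_uniq 0 N) hN0) H2.
apply: le_trans H2 _; rewrite fact0 mul1r expr1.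
apply: ler_pM; rewrite ?exprn_ge0 ?addr_ge0 ?mulr_ge0 //.
  by apply: ler_weXn2l => //; rewrite lerDl mulr_ge0 // exprn_ge0.
by apply: ler_weXn2l; rewrite ?ler1n.
Qed.

End Gen1b.

Section Pow.
Local Open Scope ring_scope.
Variable R : realType.

Lemma prod_scale (K : R) (F : nat -> R) (l : seq nat) :
  \prod_(j <- l) (K * F j) = K ^+ size l * \prod_(j <- l) F j.
Proof.
elim: l => [|x l IH]; first by rewrite !big_nil expr0 mul1r.
by rewrite !big_cons IH /= exprS; ring.
Qed.

Lemma prod_powR (F : nat -> R) (l : seq nat) (r : R) : (forall j, 0 <= F j) ->
  \prod_(j <- l) F j `^ r = (\prod_(j <- l) F j) `^ r.
Proof.
move=> F0; elim: l => [|x l IH]; first by rewrite !big_nil powR1.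
by rewrite !big_cons IH powRM // prodr_ge0.
Qed.

Lemma superadd (a b r : R) : 0 <= a -> 0 <= b -> 1 <= r ->
  a `^ r + b `^ r <= (a + b) `^ r.
Proof.
move=> a0 b0 r1; have r0 : 0 < r by lra.
have e0 : 0 <= r - 1 by lra.
have ab0 : 0 <= a + b by rewrite addr_ge0.
rewrite -(mulr_powRB1 a0 r0) -(mulr_powRB1 b0 r0) -(mulr_powRB1 ab0 r0) mulrDl.
apply: lerD; apply: ler_wpM2l => //; apply: ge0_ler_powR; rewrite ?nnegrE //.
- by rewrite lerDl.
- by rewrite lerDr.
Qed.

Lemma sum_powR_le (F : {fset nat} -> R) (l : seq {fset nat}) (r : R) :
  (forall v, 0 <= F v) -> 1 <= r ->
  \sum_(v <- l) F v `^ r <= (\sum_(v <- l) F v) `^ r.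
Proof.
move=> F0 r1; elim: l => [|x l IH]; first by rewrite !big_nil powR_ge0.
rewrite !big_cons; apply: le_trans (superadd (F0 x) _ r1); last by apply: sumr_ge0.
by apply: lerD.
Qed.

Lemma gen_bound (b : nat -> R) (r : R) : 1 <= r -> (forall j, 0 <= b j) ->
  sum_finite (fun j => b j `^ r^-1) ->
  exists M, forall N, \sum_(v <- subsL (iota 0 N)) ((#|` v|)`!)%:R `^ r * \prod_(j <- v) b j <= M.
Proof.
move=> r1 b0 sf.
have rn0 : r != 0 by apply/eqP => r0; move: r1; rewrite r0; lra.
pose c := fun j => b j `^ r^-1.
have c0 : forall j, 0 <= c j by move=> j; apply: powR_ge0.
have [M1 HM1] := Hm_bound c0 sf.
exists (M1 `^ r) => N.
have cr : forall j, c j `^ r = b j by move=> j; rewrite /c -powRrM mulVf // powRr1.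
have term : forall v : {fset nat}, ((#|` v|)`!)%:R `^ r * \prod_(j <- v) b j =
    (((#|` v| + 0)`!)%:R * \prod_(j <- v) c j) `^ r.
  move=> v; rewrite addn0 powRM ?prodr_ge0 // -prod_powR //.
  by congr (_ * _); apply: eq_bigr => j _; rewrite cr.
rewrite (eq_bigr _ (fun v _ => term v)).
apply: le_trans (sum_powR_le _ _ r1) _.
  by move=> v; rewrite mulr_ge0 // prodr_ge0.
apply: ge0_ler_powR; rewrite ?nnegrE; first lra.
- exact: Hm_ge0.
- by apply: le_trans (HM1 0%N); exact: Hm_ge0.
- exact: HM1.
Qed.

End Pow.

Section Part2.
Local Open Scope ring_scope.
Variable R : realType.

Lemma pod_upper (C : R) (s Gam : nat -> R) (a Ca r : R) : 0 < C ->
  (forall j, 0 <= s j) -> (forall k, 0 <= Gam k) -> 0 < Ca -> a <= r -> 1 <= r ->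
  (forall k, Gam k <= Ca * (k`!)%:R `^ a) ->
  sum_finite (fun j => (C ^+ 2 * s j) `^ r^-1) ->
  in_S C (POD_weights Gam s).
Proof.
move=> C0 s0 G0 Ca0 ar r1 GB sf; have C0' : 0 <= C := ltW C0.
have h0 : forall v, 0 <= C ^+ (2 * #|` v|) * POD_weights Gam s v.
  move=> v; rewrite mulr_ge0 ?exprn_ge0 //; rewrite /POD_weights mulr_ge0 //.
  by apply: prodr_ge0 => *.
rewrite /in_S (fset_finP h0).
have b0 : forall j, 0 <= C ^+ 2 * s j by move=> j; rewrite mulr_ge0 ?exprn_ge0.
have [M HM] := gen_bound r1 b0 sf.
exists (Ca * M) => N.
apply: (@le_trans _ _ (\sum_(v <- subsL (iota 0 N))
   Ca * (((#|` v|)`!)%:R `^ r * \prod_(j <- v) (C ^+ 2 * s j)))).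
  apply: ler_sum => v _; rewrite prod_scale -exprM /POD_weights.
  have P0 : 0 <= C ^+ (2 * #|` v|) * \prod_(j <- v) s j.
    by rewrite mulr_ge0 ?exprn_ge0 //; apply: prodr_ge0 => *.
  have g1 : Gam #|` v| <= Ca * ((#|` v|)`!)%:R `^ r.
    apply: le_trans (GB _) _; apply: ler_wpM2l; first exact: ltW.
    by apply: ler_powR => //; rewrite ler1n fact_gt0.
  have := ler_wpM2r P0 g1; move=> H.
  apply: le_trans _ (le_trans H _); first by rewrite mulrCA.
  by rewrite !mulrA.
by rewrite -mulr_sumr; apply: ler_wpM2l; [exact: ltW | exact: HM].
Qed.

Lemma pod_lower (C : R) (s Gam : nat -> R) : 0 < C ->
  (forall j, 0 <= s j) -> (forall k, 0 <= Gam k) -> 0 < Gam 1%N ->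
  in_S C (POD_weights Gam s) -> sum_finite s.
Proof.
move=> C0 s0 G0 G1 inS; have C0' : 0 <= C := ltW C0.
have h0 : forall v, 0 <= C ^+ (2 * #|` v|) * POD_weights Gam s v.
  move=> v; rewrite mulr_ge0 ?exprn_ge0 //; rewrite /POD_weights mulr_ge0 //.
  by apply: prodr_ge0 => *.
move: inS; rewrite /in_S (fset_finP h0) (nat_finP s0) => -[M HM].
have K0 : 0 < C ^+ 2 * Gam 1%N by rewrite mulr_gt0 ?exprn_gt0.
exists (M / (C ^+ 2 * Gam 1%N)) => N; rewrite ler_pdivlMr //.
apply: le_trans (HM N); rewrite mulr_suml.
apply: le_trans (single_le (F := fun v => C ^+ (2 * #|` v|) * POD_weights Gam s v) _ _);
  last exact: iota_uniq.
  apply: ler_sum => j _; rewrite /POD_weights cardfs1 big_seq_fset1 muln1.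
  by rewrite le_eqVlt; apply/orP; left; apply/eqP; ring.
exact: h0.
Qed.

Lemma decay_wit (s : nat -> R) (a : R) : 0 < a -> (a%:E < decay s)%E ->
  exists tau, a < tau /\ sum_finite (fun j => s j `^ tau^-1).
Proof.
move=> a0; rewrite /decay => /ereal_sup_gt [y [[tau [t0 sf] <-]|->]] ay.
  by exists tau; split => //; rewrite -lte_fin.
by exfalso; move: ay; rewrite lte_fin; lra.
Qed.

Lemma decay_sum (C : R) (s : nat -> R) (a tau : R) : 0 < C -> 0 < a -> a < tau ->
  (forall j, 0 <= s j) -> weakly_decr s ->
  sum_finite (fun j => s j `^ tau^-1) -> sum_finite (fun j => (C ^+ 2 * s j) `^ a^-1).
Proof.
move=> C0 a0 hat s0 wd sf.
have t0 : 0 < tau by lra.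
have p0 : forall j, 0 <= (C ^+ 2 * s j) `^ a^-1 by move=> j; apply: powR_ge0.
have q0 : forall j, 0 <= s j `^ tau^-1 by move=> j; apply: powR_ge0.
move: sf; rewrite (nat_finP q0) (nat_finP p0) => -[M HM].
set e := a^-1 - tau^-1.
have e0 : 0 <= e.
  rewrite /e subr_ge0; rewrite ler_pV2 ?inE ?unitfE ?gt_eqF //=; first lra.
set K := (C ^+ 2) `^ a^-1 * s 0%N `^ e.
have K0 : 0 <= K by rewrite mulr_ge0 ?powR_ge0.
exists (K * M) => N.
apply: (@le_trans _ _ (\sum_(j <- iota 0 N) K * s j `^ tau^-1)).
  apply: ler_sum => j _.
  rewrite (powRM _ (exprn_ge0 _ (ltW C0)) (s0 j)) /K -mulrA; apply: ler_wpM2l; first exact: powR_ge0.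
  have E : a^-1 = tau^-1 + e by rewrite /e; ring.
  rewrite [X in s j `^ X]E powRD; last by rewrite -E invr_eq0 gt_eqF.
  rewrite mulrC; apply: ler_wpM2r; first exact: powR_ge0.
  by apply: ge0_ler_powR; rewrite ?nnegrE //; apply: wd.
by rewrite -mulr_sumr; apply: ler_wpM2l.
Qed.

End Part2.

Local Close Scope fset_scope.
Local Open Scope ring_scope.

Theorem mainTheorem7 (R : realType) (C : R) (hC : 0 < C) :
  (* (1) product weights *)
  (forall s : nat -> R, (forall j, 0 <= s j) -> weakly_decr s ->
     (in_S C (prod_weights s) <-> sum_finite s)) /\
  (* (2) POD weights *)
  (forall (s Gam : nat -> R) (a Ca : R),
     (forall j, 0 <= s j) -> weakly_decr s ->
     (forall k, 0 <= Gam k) -> 0 < a -> 0 < Ca ->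
     (forall k, Gam k <= Ca * (k`!)%:R `^ a) ->
     ((a%:E < decay s)%E -> 0 < Gam 1%N ->
        (in_S C (POD_weights Gam s) <-> sum_finite s)) /\
     (decay s = a%:E -> 1 <= a ->
        (\esum_(j in [set: nat]) ((C ^+ 2 * s j) `^ a^-1)%:E < 1%:E)%E ->
        in_S C (POD_weights Gam s))) /\
  (* (3) finite-order weights *)
  (forall (omega : nat) (g : weights R), (0 < omega)%N ->
     nonneg_weights g -> finite_order omega g ->
     (in_S C g <-> (\esum_(u in [set: Uinf]) (g u)%:E < +oo)%E)).
Proof.
split; first by move=> s s0 _; exact: part1.
split; last by move=> omega g _ g0 fo; exact: (part3 hC g0 fo).
move=> s Gam a Ca s0 wd G0 a0 Ca0 GB; split.
  move=> ad G1; split; first exact: pod_lower.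
  move=> sf.
  case: (leP a 1) => ha.
    apply: (pod_upper (a := a) (Ca := Ca) (r := 1)) => //.
    have b0 : forall j, 0 <= C ^+ 2 * s j by move=> j; rewrite mulr_ge0 ?exprn_ge0 // ltW.
    have e : (fun j => (C ^+ 2 * s j) `^ 1^-1) = (fun j => C ^+ 2 * s j).
      by apply: funext => j; rewrite invr1 powRr1.
    rewrite e; apply/(nat_finP b0); move: sf => /(nat_finP s0) [B HB].
    exists (C ^+ 2 * B) => N; rewrite -mulr_sumr; apply: ler_wpM2l => //.
    by rewrite exprn_ge0 // ltW.
  have [tau [hat sft]] := decay_wit a0 ad.
  apply: (pod_upper (a := a) (Ca := Ca) (r := a)) => //; first exact: ltW.
  exact: decay_sum hat s0 wd sft.
move=> _ a1 lt1; apply: (pod_upper (a := a) (Ca := Ca) (r := a)) => //.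
by rewrite /sum_finite; apply: lt_trans lt1 (ltry 1).
Qed.
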